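(* Let $\{\varphi_n\}_{n\ge1}$ be an orthonormal system on $[0,1]$ such that, uniformly in $x\in[0,1]$, $\int_0^x\varphi_n(u)\,du=O\!\left(\frac1n\right)$ as $n\to\infty$. Let $\{d_n\}$ be a sequence of real numbers with $d_n=O\!\left(\frac{\sqrt{n}}{\log^2(n+1)}\right)$. Then for every $a=\{a_n\}\in\ell_2$, $$B_n(d,a)\le \max_{x\in[0,1]}\left|\int_0^x\sum_{k=1}^n d_k a_k\log k\,\varphi_k(u)\,du\right|=O(1)\quad (n\to\infty),$$ where $B_n(d,a)=\max_{1\le i<n}\left|\int_0^{i/n}\sum_{k=1}^n d_k a_k\log k\,\varphi_k(x)\,dx\right|$.
   Context: An orthonormal system on $[0,1]$ is a sequence of functions orthonormal in $L_2(0,1)$. $\log$ denotes the logarithm (so $\log 1=0$). *)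

(* Defs.v *)
From HB Require Import structures.
From mathcomp Require Import all_boot all_order all_algebra.
From mathcomp Require Import all_classical all_reals all_analysis.
Set Implicit Arguments. Unset Strict Implicit. Unset Printing Implicit Defensive.
Import Order.TTheory GRing.Theory Num.Theory.
Import numFieldNormedType.Exports.
Local Open Scope classical_set_scope.
Local Open Scope ring_scope.

Definition int0 (R : realType) (x : R) (f : R -> R) : R :=
  Rintegral (@lebesgue_measure R) `[0, x] f.

Definition orthonormal_system (R : realType) (phi : nat -> R -> R) : Prop :=
  (forall n, (0 < n)%N ->
     measurable_fun (`[0%R, 1%R] : set R) (phi n) /\
     (@lebesgue_measure R).-integrable (`[0%R, 1%R] : set R)
        (fun x => ((phi n x) ^+ 2)%:E)) /\
  (forall n m, (0 < n)%N -> (0 < m)%N ->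
     int0 1 (fun x => phi n x * phi m x) = (n == m)%:R).

Definition in_l2 (R : realType) (a : nat -> R) : Prop :=
  cvg (series (fun k => a k ^+ 2) @ \oo).

Definition Fn (R : realType) (phi : nat -> R -> R) (d a : nat -> R)
  (n : nat) (x : R) : R :=
  int0 x (fun u => \sum_(1 <= k < n.+1) d k * a k * ln (k%:R) * phi k u).

Definition Bn (R : realType) (phi : nat -> R -> R) (d a : nat -> R)
  (n : nat) : R :=
  \big[Num.max/0]_(1 <= i < n) `|Fn phi d a n (i%:R / n%:R)|.

(* Main.v *)
Require Import Defs.
From HB Require Import structures.
From mathcomp Require Import all_boot all_order all_algebra.
From mathcomp Require Import all_classical all_reals all_analysis.
From mathcomp Require Import ring lra zify measurable_realfun.
Import Order.TTheory GRing.Theory Num.Theory.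
Import numFieldNormedType.Exports.
Local Open Scope classical_set_scope.
Local Open Scope ring_scope.

Section S.
Context {R : realType}.
Notation mu := (@lebesgue_measure R).

Lemma cst1_integrable :
  mu.-integrable (`[0%R, 1%R] : set R) (fun _ => 1%:E).
Proof.
apply/integrableP; split; first exact: measurable_cst.
under eq_integral do rewrite abse1.
rewrite (integral_cst mu (measurable_itv _) 1%:E).
rewrite mul1e.
have := @lebesgue_measure_itv R `[0%R, 1%R]%R.
rewrite /= lte_fin ltr01 sube0 => ->.
exact: ltry.
Qed.

Lemma sq_integrable (f : R -> R) :
  measurable_fun (`[0%R, 1%R] : set R) f ->
  mu.-integrable (`[0%R, 1%R] : set R) (fun x => ((f x) ^+ 2)%:E) ->
  mu.-integrable (`[0%R, 1%R] : set R) (EFin \o f).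
Proof.
move=> mf i2.
have iD := integrableD _ cst1_integrable i2.
have {iD}iD := iD ltac:(exact: measurable_itv).
apply: (le_integrable _ _ _ iD) => //.
  exact/measurable_EFinP.
move=> x _ /=; rewrite lee_fin.
rewrite [X in _ <= X]ger0_norm; last by rewrite addr_ge0 // sqr_ge0.
rewrite -real_normK ?num_real //.
have := normr_ge0 (f x); nra.
Qed.

Lemma integrable_sub01 (f : R -> R) x : x <= 1 ->
  mu.-integrable (`[0%R, 1%R] : set R) (EFin \o f) ->
  mu.-integrable (`[0%R, x] : set R) (EFin \o f).
Proof.
move=> x1; apply: integrableS; [exact: measurable_itv|exact: measurable_itv|].
move=> y /=; rewrite !in_itv /= => /andP[-> yx] /=; exact: le_trans yx x1.
Qed.


Lemma Rint_sum (D : set R) (f : nat -> R -> R) m n : measurable D ->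
  (forall k, (m <= k < n)%N -> mu.-integrable D (EFin \o f k)) ->
  mu.-integrable D (fun x => (\sum_(m <= k < n) f k x)%:E) /\
  Rintegral mu D (fun x => \sum_(m <= k < n) f k x) =
    \sum_(m <= k < n) Rintegral mu D (f k).
Proof.
move=> mD; elim: n => [|n IH] fi.
  rewrite big_geq //.
  have -> : (fun x => \sum_(m <= k < 0) f k x) = (fun _ => 0).
    by apply: boolp.funext => x; rewrite big_geq.
  split; first by apply: eq_integrable (integrable0 mu D) => // x _; rewrite big_geq.
  by rewrite Rintegral_cst // mul0r.
case: (leqP m n) => mn; last first.
  rewrite big_geq //.
  have -> : (fun x => \sum_(m <= k < n.+1) f k x) = (fun _ => 0).
    by apply: boolp.funext => x; rewrite big_geq.
  split; first by apply: eq_integrable (integrable0 mu D) => // x _; rewrite big_geq.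
  by rewrite Rintegral_cst // mul0r.
have [i1 e1] : mu.-integrable D (fun x => (\sum_(m <= k < n) f k x)%:E) /\
  Rintegral mu D (fun x => \sum_(m <= k < n) f k x) =
    \sum_(m <= k < n) Rintegral mu D (f k).
  by apply: IH => k /andP[mk kn]; apply: fi; rewrite mk ltnS ltnW.
have i2 : mu.-integrable D (EFin \o f n) by apply: fi; rewrite mn ltnSn.
rewrite big_nat_recr //=.
have -> : (fun x => \sum_(m <= k < n.+1) f k x) =
    (fun x => \sum_(m <= k < n) f k x + f n x).
  by apply: boolp.funext => x; rewrite big_nat_recr.
split.
  have := @integrableD _ _ _ mu D mD _ _ i1 i2.
  by apply: (@eq_integrable _ _ _ mu D mD) => x _ /=; rewrite big_nat_recr.
by rewrite (@RintegralD _ _ _ mu D _ _ mD i1 i2) e1.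
Qed.

Lemma int0_max (g : R -> R) :
  mu.-integrable (`[0%R, 1%R] : set R) (EFin \o g) ->
  exists2 x0, 0 <= x0 <= 1 &
    forall x, 0 <= x <= 1 -> `|int0 x g| <= `|int0 x0 g|.
Proof.
move=> ig.
have c := parameterized_integral_continuous ler01 ig.
have [c1 c1i h1] := EVT_max ler01 c.
have [c2 c2i h2] := EVT_min ler01 c.
rewrite in_itv /= in c1i c2i.
have H x : 0 <= x <= 1 -> int0 c2 g <= int0 x g <= int0 c1 g.
  move=> xi; apply/andP; split.
    by apply: h2; rewrite in_itv.
  by apply: h1; rewrite in_itv.
have n1 := ler_norm (int0 c1 g).
have n2 := ler_norm (- int0 c2 g); rewrite normrN in n2.
case: (lerP `|int0 c2 g| `|int0 c1 g|) => hc.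
  exists c1 => // x /H /andP[a b].
  rewrite ler_norml; apply/andP; split; lra.
exists c2 => // x /H /andP[a b].
rewrite ler_norml; apply/andP; split; lra.
Qed.

Lemma keyC {s l0 l1 : R} : 1 <= s -> 0 < l0 -> l0 <= l1 ->
  1 <= (l1 - l0) * (s ^+ 2 + 1) ->
  ((s * l1) ^-1) ^+ 2 <= 2 * (l0^-1 - l1^-1).
Proof.
move=> s1 l0p l01 hd.
have l1p : 0 < l1 by lra.
have sp : 0 < s by lra.
rewrite -subr_ge0.
have -> : 2 * (l0^-1 - l1^-1) - ((s * l1) ^-1) ^+ 2 =
   (2 * (l1 - l0) * s ^+ 2 * l1 - l0) / (l0 * l1 ^+ 2 * s ^+ 2).
  by field; rewrite ?gt_eqF ?lt_eqF.
apply: divr_ge0; last by rewrite !mulr_ge0 // ?ltW // exprn_ge0 // ltW.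
have s2 : 1 <= s ^+ 2 by rewrite expr_ge1 // ltW.
have dp : 0 <= l1 - l0 by lra.
have h1 : 1 <= 2 * (l1 - l0) * s ^+ 2.
  have : 0 <= (l1 - l0) * (s ^+ 2 - 1) by rewrite mulr_ge0 // subr_ge0.
  lra.
have : l1 <= 2 * (l1 - l0) * s ^+ 2 * l1.
  by rewrite -{1}[l1]mul1r ler_wpM2r // ltW.
lra.
Qed.

Lemma keyAB {s l0 l1 y : R} : 0 < s -> 0 < l0 -> l0 <= l1 -> 0 <= y ->
  s / l1 ^+ 2 * y * l0 / s ^+ 2 <= y ^+ 2 + ((s * l1) ^-1) ^+ 2.
Proof.
move=> sp l0p l01 y0.
have l1p : 0 < l1 by lra.
set q := (s * l1)^-1.
have qp : 0 <= q by rewrite /q invr_ge0 mulr_ge0 // ltW.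
have -> : s / l1 ^+ 2 * y * l0 / s ^+ 2 = y * q * (l0 / l1).
  by rewrite /q; field; rewrite ?gt_eqF.
have r1 : l0 / l1 <= 1 by rewrite ler_pdivrMr // mul1r.
have r0 : 0 <= l0 / l1 by rewrite divr_ge0 // ltW.
have : y * q * (l0 / l1) <= y * q by rewrite ler_piMr // mulr_ge0.
have : 0 <= (y - q) ^+ 2 by apply: sqr_ge0.
nra.
Qed.

Lemma ln_diff (k : nat) : (2 <= k)%N ->
  (1 <= (ln (k.+1%:R : R) - ln (k%:R : R)) * (k%:R + 1)) /\ (0 < ln (k%:R : R) <= ln (k.+1%:R : R)).
Proof.
move=> k2.
have kp : (0 : R) < k%:R by rewrite ltr0n; case: k k2.
have k1p : (0 : R) < k.+1%:R by rewrite ltr0n.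
split; last first.
  apply/andP; split; first by apply: ln_gt0; rewrite ltr1n.
  by rewrite ler_ln ?posrE // ler_nat.
have e : k%:R / k.+1%:R = 1 + (- (k.+1%:R)^-1) :> R.
  rewrite -natr1; field; rewrite -?natr1 gt_eqF // ltr_wpDr //.
have h := le_ln1Dx (x := - (k.+1%:R : R)^-1).
rewrite -e ln_div ?posrE // in h.
have : ((k.+1%:R : R)^-1) * (k%:R + 1) = 1.
  by rewrite natr1 mulVf // gt_eqF.
have : - (k.+1%:R : R)^-1 > -1.
  by rewrite ltrN2 invf_lt1 // ltr1n ltnS (leq_trans _ k2).
move=> hm eq1; have h2 := h hm.
have hk : 0 < (k%:R : R) + 1 by lra.
set A := ln (k%:R : R) - ln k.+1%:R + (k.+1%:R)^-1.
have hA : A * (k%:R + 1) <= 0.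
 apply: mulr_le0_ge0; last lra.
 rewrite /A. move: h2. set u := ln _ - ln _. set v := _^-1. move=> h2. lra.
have -> : (ln k.+1%:R - ln k%:R) * (k%:R + 1) = - (A * (k%:R + 1)) + (k.+1%:R)^-1 * (k%:R + 1) by rewrite /A; ring.
rewrite eq1; lra.
Qed.


Lemma ind_sum (K m n : nat) (B : R) : 0 <= B ->
  \sum_(m <= k < n) ((k < K)%N%:R * B) <= K%:R * B.
Proof.
move=> B0.
suff h : \sum_(m <= k < n) ((k < K)%N%:R * B) <= (minn n K)%:R * B.
  by apply: (le_trans h); rewrite ler_wpM2r // ler_nat geq_minr.
elim: n => [|n IH]; first by rewrite big_geq // min0n mul0r.
case: (leqP m n) => mn; last by rewrite big_geq // mulr_ge0.
rewrite big_nat_recr //=.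
have -> : (minn n.+1 K)%:R * B = (minn n K)%:R * B + (n < K)%N%:R * B.
  rewrite -mulrDl -natrD; congr (_%:R * _).
  case: (ltnP n K) => nK /=; rewrite ?addn1 ?addn0.
    lia.
  lia.
by rewrite lerD2r.
Qed.

Definition uu (k : nat) : R := (ln ((maxn k 2)%:R : R))^-1.

Lemma uu_ge0 k : 0 < uu k.
Proof.
by rewrite /uu invr_gt0 ln_gt0 // ltr1n leq_max orbT.
Qed.

Lemma uu_dec k : uu k.+1 <= uu k.
Proof.
rewrite /uu lef_pV2 ?posrE ?ln_gt0 ?ltr1n ?leq_max ?orbT //.
have h1 : (0 < maxn k 2)%N by rewrite leq_max orbT.
have h2 : (0 < maxn k.+1 2)%N by rewrite leq_max orbT.
rewrite ler_ln ?posrE ?ltr0n // ler_nat; lia.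
Qed.

Lemma uu_tel n : \sum_(1 <= k < n.+1) (2 * (uu k - uu k.+1)) <= 2 * uu 1.
Proof.
rewrite -mulr_sumr ler_pM2l //.
have -> : \sum_(1 <= k < n.+1) (uu k - uu k.+1) = - \sum_(1 <= k < n.+1) (uu k.+1 - uu k).
  by rewrite -sumrN; apply: eq_bigr => k _; rewrite opprB.
rewrite telescope_sumr //.
have := uu_ge0 n.+1; lra.
Qed.
End S.

Theorem theorem5 (R : realType) (phi : nat -> R -> R) (d : nat -> R) :
  orthonormal_system phi ->
  (exists C : R, exists N : nat, forall n : nat, (N <= n)%N ->
     forall x : R, 0 <= x <= 1 -> `|int0 x (phi n)| <= C / n%:R) ->
  (exists C : R, exists N : nat, forall n : nat, (N <= n)%N ->
     `|d n| <= C * Num.sqrt (n%:R) / (ln (n.+1%:R)) ^+ 2) ->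
  forall a : nat -> R, in_l2 a ->
    (forall n : nat, (1 <= n)%N ->
       exists x0 : R, 0 <= x0 <= 1 /\
         (forall x : R, 0 <= x <= 1 -> `|Fn phi d a n x| <= `|Fn phi d a n x0|) /\
         Bn phi d a n <= `|Fn phi d a n x0|) /\
    (exists M : R, exists N : nat, forall n : nat, (N <= n)%N ->
       forall x : R, 0 <= x <= 1 -> `|Fn phi d a n x| <= M).
Proof.
move=> [Hm _] [C1 [N1 H1]] [C2 [N2 H2]] a ha.
have phiI k : (0 < k)%N ->
    (@lebesgue_measure R).-integrable (`[0%R, 1%R] : set R) (EFin \o phi k).
  by move=> k0; have [m1 m2] := Hm k k0; exact: sq_integrable.
have termI (x c : R) k : x <= 1 -> (0 < k)%N ->
    (@lebesgue_measure R).-integrable (`[0%R, x] : set R) (EFin \o (fun u => c * phi k u)).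
  move=> x1 k0.
  have hI := @integrable_sub01 R (phi k) x x1 (phiI k k0).
  have := @integrableZl _ _ _ (@lebesgue_measure R) _ (measurable_itv `[0%R, x]) c _ hI.
  move=> hh; apply: (eq_integrable _ _ _ _ hh); first exact: measurable_itv.
  by move=> u _ /=; rewrite EFinM.
have Fexp n x : x <= 1 -> Fn phi d a n x =
    \sum_(1 <= k < n.+1) (d k * a k * ln (k%:R) * int0 x (phi k)).
  move=> x1; rewrite /Fn /int0.
  have hk : forall k, (0 < k < n.+1)%N -> (@lebesgue_measure R).-integrable (`[0%R, x] : set R)
      (EFin \o (fun u => d k * a k * ln (k%:R) * phi k u)).
    by move=> k /andP[k1 _]; apply: termI.
  have [_ ->] := @Rint_sum R `[0%R, x] (fun k u => d k * a k * ln (k%:R) * phi k u) 1 n.+1 (measurable_itv _) hk.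
  rewrite big_nat_cond [in RHS]big_nat_cond; apply: eq_bigr => k /andP[/andP[k1 _] _].
  by rewrite (@RintegralZl _ _ _ (@lebesgue_measure R) _ (phi k) _ (measurable_itv `[0%R, x])) //; apply: (@integrable_sub01 R (phi k) x x1); apply: phiI.
have FI n : (@lebesgue_measure R).-integrable (`[0%R, 1%R] : set R)
    (EFin \o (fun u => \sum_(1 <= k < n.+1) d k * a k * ln (k%:R) * phi k u)).
  have hk : forall k, (0 < k < n.+1)%N -> (@lebesgue_measure R).-integrable (`[0%R, 1%R] : set R)
      (EFin \o (fun u => d k * a k * ln (k%:R) * phi k u)).
    by move=> k /andP[k1 _]; apply: termI.
  by have [-> _] := @Rint_sum R `[0%R, 1%R] (fun k u => d k * a k * ln (k%:R) * phi k u) 1 n.+1 (measurable_itv _) hk.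
split.
  move=> n n1.
  have [x0 hx0 hmax] := int0_max _ (FI n).
  exists x0; split => //; split; first by rewrite /Fn; exact: hmax.
  rewrite /Bn big_nat_cond; apply: bigmax_le; first exact: normr_ge0.
  move=> i /andP[/andP[i1 iN] _].
  have hi : 0 <= (i%:R / n%:R : R) <= 1.
    apply/andP; split; first exact: (divr_ge0 (ler0n _ _) (ler0n _ _)).
    rewrite ler_pdivrMr; last by rewrite ltr0n (leq_trans _ iN).
    by rewrite mul1r ler_nat ltnW.
  exact: (hmax _ hi).
have hc : forall k : nat, exists x0 : R, (0 < k)%N ->
    (0 <= x0 <= 1 /\ forall x, 0 <= x <= 1 -> `|int0 x (phi k)| <= `|int0 x0 (phi k)|).
  move=> [|k]; first by exists 0.
  have [x0 h1 h2] := int0_max _ (phiI k.+1 (ltn0Sn k)).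
  by exists x0.
have [xk hxk] := choice hc.
set K := maxn (maxn N1 N2) 2.
set b := fun k => `|d k * a k * ln (k%:R : R)| * `|int0 (xk k) (phi k)|.
set Bs := \sum_(j < K) b j.
have b0 k : 0 <= b k by apply: mulr_ge0; apply: normr_ge0.
have Bs0 : 0 <= Bs by apply: sumr_ge0 => j _; apply: b0.
have small k x : (0 < k)%N -> (k < K)%N -> 0 <= x <= 1 ->
    `|d k * a k * ln (k%:R : R) * int0 x (phi k)| <= Bs.
  move=> k0 kK hx.
  apply: (@le_trans _ _ (b k)).
    rewrite normrM /b; apply: ler_wpM2l; first exact: normr_ge0.
    exact: ((hxk k k0).2 x hx).
  rewrite /Bs (bigD1 (Ordinal kK)) //= lerDl.
  by apply: sumr_ge0 => j _; apply: b0.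
set L := `|C2| * `|C1|.
have L0 : 0 <= L by apply: mulr_ge0; apply: normr_ge0.
have big k x : (K <= k)%N -> 0 <= x <= 1 ->
    `|d k * a k * ln (k%:R : R) * int0 x (phi k)| <=
    L * (a k ^+ 2 + 2 * (uu k - uu k.+1)).
  move=> kK hx.
  have k2 : (2 <= k)%N by move: kK; rewrite /K; lia.
  have hN1 : (N1 <= k)%N by move: kK; rewrite /K; lia.
  have hN2 : (N2 <= k)%N by move: kK; rewrite /K; lia.
  have [hd hl] := @ln_diff R k k2.
  have uk : uu k = (ln (k%:R : R))^-1 by rewrite /uu (maxn_idPl k2).
  have uk1 : uu k.+1 = (ln (k.+1%:R : R))^-1 by rewrite /uu (maxn_idPl (leqW k2)).
  rewrite uk uk1.
  move: hd hl (H2 k hN2) (H1 k hN1 x hx).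
  set l0 := ln (k%:R : R); set l1 := ln (k.+1%:R : R).
  set I := int0 x (phi k).
  have ks : (k%:R : R) = (Num.sqrt (k%:R : R)) ^+ 2 by rewrite sqr_sqrtr // ler0n.
  set s := Num.sqrt (k%:R : R).
  rewrite ks => hd /andP[l0p l01] hdk hIk.
  have s0 : 0 <= s by apply: sqrtr_ge0.
  have s1 : 1 <= s.
    have h1k : (1 : R) <= k%:R by rewrite ler1n; lia.
    by have := ler_wsqrtr h1k; rewrite sqrtr1.
  have sp : 0 < s by lra.
  have l1p : 0 < l1 by lra.
  have hd' : `|d k| <= `|C2| * s / l1 ^+ 2.
    apply: (le_trans hdk); rewrite -!mulrA; apply: ler_wpM2r; last exact: ler_norm.
    by apply: mulr_ge0 => //; rewrite invr_ge0 exprn_ge0 // ltW.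
  have hI' : `|I| <= `|C1| / s ^+ 2.
    apply: (le_trans hIk); apply: ler_wpM2r; last exact: ler_norm.
    by rewrite invr_ge0 exprn_ge0.
  rewrite !normrM (ger0_norm (ltW l0p)).
  apply: (@le_trans _ _ ((`|C2| * s / l1 ^+ 2) * `|a k| * l0 * (`|C1| / s ^+ 2))).
    apply: ler_pM.
    - by rewrite !mulr_ge0 // ltW.
    - exact: normr_ge0.
    - rewrite ler_wpM2r ?(ltW l0p) // ler_wpM2r //; exact: normr_ge0.
    - exact: hI'.
  have -> : (`|C2| * s / l1 ^+ 2) * `|a k| * l0 * (`|C1| / s ^+ 2) =
      L * (s / l1 ^+ 2 * `|a k| * l0 / s ^+ 2) by rewrite /L; ring.
  apply: ler_wpM2l => //.
  apply: (le_trans (keyAB sp l0p l01 (normr_ge0 (a k)))).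
  rewrite real_normK ?num_real // lerD2l.
  apply: keyC => //; lra.
have term k x : (0 < k)%N -> 0 <= x <= 1 ->
    `|d k * a k * ln (k%:R : R) * int0 x (phi k)| <=
    (k < K)%N%:R * Bs + L * (a k ^+ 2 + 2 * (uu k - uu k.+1)).
  move=> k0 hx.
  have nn : 0 <= L * (a k ^+ 2 + 2 * (uu k - uu k.+1)).
    apply: mulr_ge0 => //; apply: addr_ge0; first exact: sqr_ge0.
    by apply: mulr_ge0 => //; rewrite subr_ge0; apply: uu_dec.
  case: (ltnP k K) => kK.
    rewrite mul1r; apply: (le_trans (small k x k0 kK hx)); by rewrite lerDl.
  by rewrite mul0r add0r; apply: big.
set A := limn (series (fun k => a k ^+ 2)).
have hA n : \sum_(1 <= k < n.+1) a k ^+ 2 <= A.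
  have nd : nondecreasing_seq (series (fun k => a k ^+ 2)).
    by apply: nondecreasing_series => k _ _; apply: sqr_ge0.
  have := nondecreasing_cvgn_le nd ha n.+1.
  rewrite /series /= big_ltn // => h.
  apply: le_trans h; rewrite lerDr; exact: sqr_ge0.
exists (K%:R * Bs + L * (A + 2 * uu 1)), 0%N => n _ x hx.
have x1 : x <= 1 by case/andP: hx.
rewrite (Fexp n x x1).
apply: (le_trans (ler_norm_sum _ _ _)).
apply: (@le_trans _ _ (\sum_(1 <= k < n.+1) ((k < K)%N%:R * Bs + L * (a k ^+ 2 + 2 * (uu k - uu k.+1))))).
  rewrite big_nat_cond [X in _ <= X]big_nat_cond; apply: ler_sum => k /andP[/andP[k1 _] _].
  exact: term.
rewrite big_split /= -mulr_sumr big_split /=.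
apply: lerD; first exact: ind_sum.
apply: ler_wpM2l => //; apply: lerD; first exact: hA.
exact: uu_tel.
Qed.
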